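(* Let $\rho\in C_1(\widetilde\Gamma,\widetilde H;\mathbb{Q})$ be a non-geometric Nielsen 1-chain for $f$ relative to $H$. There is a constant $B\ge1$ such that for all pairwise distinct $g_1,\dots,g_r\in\mathbb{F}$, all $q_1,\dots,q_r\in\mathbb{Q}$, $x=q_1g_1\rho+\cdots+q_rg_r\rho$, and all $k\ge0$, $$\sum_{j=1}^rq_j^2\le\|A_{f,H}^k(x)\|^2\le B\sum_{j=1}^rq_j^2.$$
   Context: Setup: $\mathbb{F}$ finitely generated free, $\Gamma$ a finite connected graph with $\pi_1(\Gamma)\cong\mathbb{F}$, $f$ a homotopy equivalence, cellular and edge-linear, $H\subset\Gamma$ a subgraph with $f(H)\subseteq H$, $\widetilde\Gamma$ the universal cover with deck action of $\mathbb{F}$, $\widetilde H$ the preimage of $H$, $\tilde f$ a fixed lift with $\tilde f(gz)=\Phi_f(g)\tilde f(z)$. $C_1(\widetilde\Gamma;\mathbb{Q})$: finitely supported rational 1-chains $x=\sum_ex_ee$; $A_f$ induced by $\tilde f$; $C_1(\widetilde\Gamma,\widetilde H;\mathbb{Q})$ chains vanishing on edges of $\widetilde H$; $\pi_H^\perp$ the projection onto it; $A_{f,H}=\pi_H^\perp\circ A_f|_{C_1(\widetilde\Gamma,\widetilde H;\mathbb Q)}$; $\|x\|^2=\sum_ex_e^2$. $[u,v]$ is the 1-chain of the reduced edge-path from $u$ to $v$ (coefficients $\pm1$ on its edges). A non-geometric Nielsen 1-chain is $\rho=\pi_H^\perp([u,v])$ with $u,v$ vertices fixed by $\tilde f$ such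 that some edge $e\notin\widetilde H$ has $\rho_e=\pm1$ and $\rho_{ge}=0$ for every nontrivial $g\in\mathbb{F}$. (Note $A_{f,H}(g\rho)=\Phi_f(g)\rho$.) *)

(* Defs.v *)
(* Combinatorial model of a finite graph Gamma, its universal
   cover (tree of reduced walks from a base vertex), the deck action of
   F = pi_1(Gamma, v0), rational 1-chains, a lift of f and A_{f,H}. *)
From mathcomp Require Import all_boot all_order all_algebra.
Set Implicit Arguments. Unset Strict Implicit. Unset Printing Implicit Defensive.
Import Order.TTheory GRing.Theory Num.Theory.
Local Open Scope ring_scope.

Section Graph.
Variables (V E : finType) (src tgt : E -> V).

(* directed edges: (e, true) traverses e from src to tgt, (e,false) backwards *)
Definition dedge := (E * bool)%type.
Definition dorg (d : dedge) : V := if d.2 then src d.1 else tgt d.1.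
Definition dter (d : dedge) : V := if d.2 then tgt d.1 else src d.1.
Definition dinv (d : dedge) : dedge := (d.1, ~~ d.2).

Fixpoint is_walk_from (u : V) (w : seq dedge) : bool :=
  if w is d :: w' then (dorg d == u) && is_walk_from (dter d) w' else true.
Definition wend (u : V) (w : seq dedge) : V := last u (map dter w).
Definition is_walk (u v : V) (w : seq dedge) := is_walk_from u w && (wend u w == v).

Definition winv (w : seq dedge) : seq dedge := rev (map dinv w).

Fixpoint reduced (w : seq dedge) : bool :=
  if w is d :: w' then
    (if w' is d' :: _ then d' != dinv d else true) && reduced w'
  else true.

Fixpoint red (w : seq dedge) : seq dedge :=
  if w is d :: w' then
    let r := red w' in
    if r is d' :: r' then (if d' == dinv d then r' else d :: r) else [:: d]
  else [::].

Definition connected_graph := forall u v : V, exists w, is_walk u v w.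

Variable v0 : V.

(* F = pi_1(Gamma, v0) as reduced closed paths at v0 (identity [::],
   product red (g ++ h)) *)
Definition Fgrp (g : seq dedge) : bool := is_walk v0 v0 g && reduced g.

(* vertices of the universal cover: reduced paths starting at v0 *)
Definition tvert (p : seq dedge) : bool := is_walk_from v0 p && reduced p.

Definition act (g p : seq dedge) : seq dedge := red (g ++ p).

(* edges of the universal cover: (p, e) is the lift of e (oriented src->tgt)
   starting at the tree vertex p *)
Definition tedge := (seq dedge * E)%type.

(* finitely supported rational 1-chains, as formal sums *)
Definition chain := seq (tedge * rat).
Definition coef (x : chain) (t : tedge) : rat := \sum_(a <- x | a.1 == t) a.2.
Definition norm2 (x : chain) : rat := \sum_(t <- undup (map fst x)) coef x t ^+ 2.
Definition cscale (c : rat) (x : chain) : chain := map (fun a => (a.1, c * a.2)) x.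
Definition cact (g : seq dedge) (x : chain) : chain :=
  map (fun a => ((act g a.1.1, a.1.2), a.2)) x.

(* 1-chain of the lift, starting at tree vertex p, of the edge path w *)
Fixpoint wchain (p : seq dedge) (w : seq dedge) : chain :=
  if w is d :: w' then
    let p' := red (rcons p d) in
    (if d.2 then ((p, d.1), 1%R) else ((p', d.1), (-1)%R)) :: wchain p' w'
  else [::].

(* [u, v] : chain of the reduced edge path from u to v in the tree *)
Definition seg (u v : seq dedge) : chain := wchain u (red (winv u ++ v)).

Variable HE : {set E}.
(* projection onto C_1(tilde Gamma, tilde H; Q) *)
Definition projH (x : chain) : chain := filter (fun a => a.1.2 \notin HE) x.

(* the map f : vertices fV, edge e |-> edge path fE e *)
Variables (fV : V -> V) (fE : E -> seq dedge).
Definition fw (w : seq dedge) : seq dedge :=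
  flatten (map (fun d => if d.2 then fE d.1 else winv (fE d.1)) w).

(* lift of f determined by a path gam from v0 to fV v0 *)
Variable gam : seq dedge.
Definition ftilde (p : seq dedge) : seq dedge := red (gam ++ fw p).
Definition Phi (g : seq dedge) : seq dedge := red (gam ++ fw g ++ winv gam).

Definition Af (x : chain) : chain :=
  flatten (map (fun a => cscale a.2 (wchain (ftilde a.1.1) (fE a.1.2))) x).
Definition AfH (x : chain) : chain := projH (Af x).

End Graph.

(* Main.v *)
Require Import Defs.
From mathcomp Require Import all_boot all_order all_algebra.
From mathcomp Require Import zify ring lra.
Import Order.TTheory GRing.Theory Num.Theory.
Local Open Scope ring_scope.
Set Implicit Arguments. Unset Strict Implicit. Unset Printing Implicit Defensive.


Section Red.
Variable E : finType.
Notation D := (dedge E).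
Implicit Types (d : D) (w a b c p : seq D).

Definition cr d (r : seq D) : seq D :=
  if r is d' :: r' then (if d' == dinv d then r' else d :: r) else [:: d].

Lemma red_cons d w : red (d :: w) = cr d (red w).
Proof. by []. Qed.

Lemma dinvK d : dinv (dinv d) = d.
Proof. by case: d => e []. Qed.

Lemma dinv_neq d : (dinv d == d) = false.
Proof. by case: d => e [] /=; rewrite xpair_eqE eqxx. Qed.

Lemma reduced_cons d r : reduced (d :: r) = (if r is d' :: _ then d' != dinv d else true) && reduced r.
Proof. by []. Qed.

Lemma cr_reduced d r : reduced r -> reduced (cr d r).
Proof.
case: r => [|d' r] //= /andP[h1 h2].
case: ifP => [/eqP e|ne] //=.
by rewrite ne h1 h2.
Qed.

Lemma red_reduced w : reduced (red w).
Proof. by elim: w => [|d w IH] //=; apply: cr_reduced. Qed.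

Lemma red_id w : reduced w -> red w = w.
Proof.
elim: w => [|d w IH] // Hr; rewrite red_cons.
move: Hr; rewrite reduced_cons => /andP[h1 h2]; rewrite IH //.
by case: w h1 {IH h2} => [|d' w] //= /negPf ->.
Qed.

Lemma redK w : red (red w) = red w.
Proof. exact/red_id/red_reduced. Qed.

Lemma crK d r : reduced r -> cr d (cr (dinv d) r) = r.
Proof.
rewrite /cr; case: r => [|d' r] /=; first by rewrite eqxx.
move=> /andP[h1 h2].
case: ifP => [/eqP Ed|ne] /=; last by rewrite eqxx.
rewrite dinvK in Ed; subst d'. case: r h1 h2 => [|x r] //=.
by move=> /negPf ->.
Qed.

Lemma red_cat a b : red (a ++ b) = foldr cr (red b) a.
Proof. by elim: a => [|d a IH] //=; rewrite IH. Qed.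

Lemma redRK a b : red (a ++ red b) = red (a ++ b).
Proof. by rewrite !red_cat redK. Qed.

Lemma red_cancel a d b : red (a ++ d :: dinv d :: b) = red (a ++ b).
Proof. by rewrite !red_cat !red_cons crK // red_reduced. Qed.

Lemma redLK a b : red (red a ++ b) = red (a ++ b).
Proof.
elim: a => [|x a IH] //.
rewrite red_cons cat_cons red_cons -IH.
have := red_reduced a; case: (red a) => [|y a'] Hr.
  by [].
rewrite [cr x (y :: a')]/cr; case: ifP => [/eqP ey|ne].
  by rewrite cat_cons red_cons ey crK // red_reduced.
by rewrite !cat_cons !red_cons.
Qed.

Lemma redLRK a b c : red (a ++ red b ++ c) = red (a ++ b ++ c).
Proof. by rewrite -redRK redLK redRK. Qed.

Lemma red_nil : red [::] = [::] :> seq D. Proof. by []. Qed.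

Lemma winv_cat a b : winv (a ++ b) = winv b ++ winv a.
Proof. by rewrite /winv map_cat rev_cat. Qed.

Lemma winvK a : winv (winv a) = a.
Proof. by rewrite /winv map_rev revK -map_comp (eq_map dinvK) map_id. Qed.

Lemma winv_cons d a : winv (d :: a) = winv a ++ [:: dinv d].
Proof. by rewrite /winv /= rev_cons cats1. Qed.

Lemma red_winvL a : red (winv a ++ a) = [::].
Proof.
elim: a => [|d a IH] //.
rewrite winv_cons -catA /= -{2}[d]dinvK red_cancel //.
Qed.

Lemma red_winvR a : red (a ++ winv a) = [::].
Proof. by rewrite -{1}[a]winvK red_winvL. Qed.

Lemma red_cancelL a b c : red (a ++ winv b ++ b ++ c) = red (a ++ c).
Proof. by rewrite -redRK (catA (winv b)) -(redLK (winv b ++ b)) red_winvL /= redRK. Qed.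

Lemma red_cancelR a b c : red (a ++ b ++ winv b ++ c) = red (a ++ c).
Proof. by rewrite -{1}[b]winvK red_cancelL. Qed.

Lemma not_reduced w : ~~ reduced w -> exists a d b, w = a ++ d :: dinv d :: b.
Proof.
elim: w => [|x w IH] //; rewrite reduced_cons negb_and => /orP[].
  case: w {IH} => [|y w] //; rewrite negbK => /eqP ->.
  by exists [::], x, w.
move=> /IH [a [d [b ->]]]; by exists (x :: a), d, b.
Qed.

Lemma red_invariant (T : Type) (Q : seq D -> T) :
  (forall a d b, Q (a ++ d :: dinv d :: b) = Q (a ++ b)) -> forall w, Q (red w) = Q w.
Proof.
move=> HQ w; have [n] := ubnP (size w); elim: n w => [|n IH] w // Hs.
case Hr: (reduced w); first by rewrite red_id.
have [a [d [b Ew]]] := not_reduced (negbT Hr).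
rewrite Ew red_cancel HQ IH //.
move: Hs; rewrite Ew !size_cat /= ltnS. lia.
Qed.

Definition act' g p := red (g ++ p).

Lemma act_comp g h p : act g (act h p) = act (red (g ++ h)) p.
Proof. by rewrite /act redRK redLK catA. Qed.

Lemma act_invK g p : reduced p -> act (winv g) (act g p) = p.
Proof. by move=> Hp; rewrite /act redRK (red_cancelL [::]) /= red_id. Qed.

Lemma act_Kinv g p : reduced p -> act g (act (winv g) p) = p.
Proof. by move=> Hp; rewrite -{1}[g]winvK act_invK. Qed.

Lemma act_reduced g p : reduced (act g p).
Proof. exact: red_reduced. Qed.

End Red.


Section Chains.
Variable E : finType.
Notation D := (dedge E).
Notation T := (tedge E).
Notation C := (chain E).
Implicit Types (x y : C) (H : T -> rat).

Definition sumL x H := \sum_(a <- x) a.2 * H a.1.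
Definition ceq x y := forall H, sumL x H = sumL y H.

Lemma sumL_nil H : sumL [::] H = 0. Proof. by rewrite /sumL big_nil. Qed.
Lemma sumL_cons a x H : sumL (a :: x) H = a.2 * H a.1 + sumL x H.
Proof. by rewrite /sumL big_cons. Qed.
Lemma sumL_cat x y H : sumL (x ++ y) H = sumL x H + sumL y H.
Proof. by rewrite /sumL big_cat. Qed.
Lemma sumL_cscale c x H : sumL (cscale c x) H = c * sumL x H.
Proof. by rewrite /sumL big_map mulr_sumr; apply: eq_bigr => a _ /=; rewrite mulrA. Qed.
Lemma sumL_cact g x H : sumL (cact g x) H = sumL x (fun s => H (act g s.1, s.2)).
Proof. by rewrite /sumL big_map. Qed.
Lemma sumL_projH HE x H :
  sumL (projH HE x) H = sumL x (fun s => if s.2 \notin HE then H s else 0).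
Proof.
rewrite /sumL big_filter big_mkcond; apply: eq_bigr => a _.
by case: ifP => _; rewrite ?mulr0.
Qed.
Lemma sumL_flatten (I : Type) (G : I -> C) l H :
  sumL (flatten (map G l)) H = \sum_(j <- l) sumL (G j) H.
Proof.
elim: l => [|i l IH]; first by rewrite big_nil sumL_nil.
by rewrite /= sumL_cat IH big_cons.
Qed.
Lemma sumL_ext x H1 H2 : (forall a, a \in x -> H1 a.1 = H2 a.1) -> sumL x H1 = sumL x H2.
Proof. by move=> h; rewrite /sumL; apply: eq_big_seq => a /h ->. Qed.
Lemma sumL_lin x H1 H2 c : sumL x (fun s => H1 s + c * H2 s) = sumL x H1 + c * sumL x H2.
Proof.
rewrite /sumL mulr_sumr -big_split; apply: eq_bigr => a _ /=; ring.
Qed.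

Lemma coefS x t : coef x t = sumL x (fun s => (s == t)%:R).
Proof.
rewrite /coef /sumL big_mkcond; apply: eq_bigr => a _.
by case: eqP => _; rewrite ?mulr1 ?mulr0.
Qed.

Lemma coef_notin x t : t \notin map fst x -> coef x t = 0.
Proof.
move=> Ht; rewrite /coef big_seq_cond big1 // => a /andP[Ha /eqP Ea].
by move: Ht; rewrite -Ea map_f.
Qed.

Lemma sumL_L (L : seq T) x H : uniq L -> {subset map fst x <= L} ->
  sumL x H = \sum_(t <- L) coef x t * H t.
Proof.
move=> UL; elim: x => [|a x IH] Hs.
  by rewrite sumL_nil big1 // => t _; rewrite /coef big_nil mul0r.
rewrite sumL_cons IH; last by move=> t Ht; apply: Hs; rewrite inE Ht orbT.
have Ha : a.1 \in L by apply: Hs; rewrite inE eqxx.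
rewrite [in RHS](eq_bigr (fun t => (if a.1 == t then a.2 * H t else 0) + coef x t * H t)); last first.
  move=> t _; rewrite /coef big_cons; case: ifP => _; ring.
rewrite big_split /=; congr (_ + _).
rewrite (bigD1_seq a.1) //= eqxx big1 ?addr0 // => t /negPf.
by rewrite eq_sym => ->.
Qed.

Lemma ceq_coef x y t : ceq x y -> coef x t = coef y t.
Proof. by move=> h; rewrite !coefS h. Qed.

Lemma norm2_L (L : seq T) x : uniq L -> {subset map fst x <= L} ->
  norm2 x = \sum_(t <- L) coef x t ^+ 2.
Proof.
move=> UL HL; rewrite /norm2.
rewrite [RHS](bigID (fun t => t \in map fst x)) /= [X in _ + X]big1 ?addr0; last first.
  by move=> t /coef_notin ->; rewrite expr0n.
rewrite -[RHS]big_filter; apply: perm_big; apply: uniq_perm.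
- exact: undup_uniq.
- exact: filter_uniq.
move=> t; rewrite mem_undup mem_filter; case Ht: (t \in map fst x) => //=.
by rewrite HL.
Qed.

Lemma norm2_ceq x y : ceq x y -> norm2 x = norm2 y.
Proof.
move=> h; set L := undup (map fst x ++ map fst y).
have UL : uniq L by apply: undup_uniq.
rewrite (@norm2_L L x) // ?(@norm2_L L y) //.
- by apply: eq_bigr => t _; rewrite (ceq_coef t h).
- by move=> t Ht; rewrite mem_undup mem_cat Ht orbT.
- by move=> t Ht; rewrite mem_undup mem_cat Ht.
Qed.

Lemma sum_sub_le (S L : seq T) (F : T -> rat) : uniq S -> uniq L -> {subset S <= L} ->
  (forall t, 0 <= F t) -> \sum_(t <- S) F t <= \sum_(t <- L) F t.
Proof.
move=> US UL HSL HF.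
rewrite [leRHS](bigID (fun t => t \in S)) /=.
rewrite -[leLHS]addr0 lerD //; last by apply: sumr_ge0.
rewrite le_eqVlt; apply/orP; left; apply/eqP.
rewrite -[RHS]big_filter; apply: perm_big; apply: uniq_perm => //; first exact: filter_uniq.
by move=> t; rewrite mem_filter; case Ht: (t \in S) => //=; rewrite HSL.
Qed.

Lemma sum_le_norm2 (S : seq T) x : uniq S -> \sum_(t <- S) coef x t ^+ 2 <= norm2 x.
Proof.
move=> US; set L := undup (map fst x ++ S).
rewrite (@norm2_L L) ?undup_uniq //; last by move=> t Ht; rewrite mem_undup mem_cat Ht.
apply: sum_sub_le => //; first exact: undup_uniq.
- by move=> t Ht; rewrite mem_undup mem_cat Ht orbT.
- by move=> t; apply: sqr_ge0.
Qed.

End Chains.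


Section WChain.
Variable E : finType.
Notation D := (dedge E).
Notation T := (tedge E).
Notation C := (chain E).
Implicit Types (x y : C) (H : T -> rat) (d : D) (w a b p q : seq D).

Definition wpos p a := foldl (fun p d => red (rcons p d)) p a.

Lemma wchain_cat p a b : wchain p (a ++ b) = wchain p a ++ wchain (wpos p a) b.
Proof. by elim: a p => [|d a IH] p //=; rewrite IH. Qed.

Lemma wpos_red p a : reduced p -> wpos p a = red (p ++ a).
Proof.
elim: a p => [|d a IH] p Hp /=; first by rewrite cats0 red_id.
by rewrite IH ?red_reduced // redLK cat_rcons.
Qed.

Lemma wchain_act g p w : wchain (act g p) w = cact g (wchain p w).
Proof.
elim: w p => [|d w IH] p //=.
have -> : red (rcons (act g p) d) = act g (red (rcons p d)).
  by rewrite /act -!cats1 redLK redRK catA.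
by rewrite IH; case: ifP.
Qed.

Lemma wchain_cancel p a d b : reduced p ->
  ceq (wchain p (a ++ d :: dinv d :: b)) (wchain p (a ++ b)).
Proof.
move=> Hp H; rewrite !wchain_cat !sumL_cat wpos_red //; congr (_ + _).
set q := red (p ++ a).
have Hq : reduced q by apply: red_reduced.
have Eq : red (rcons (red (rcons q d)) (dinv d)) = q.
  by rewrite -!cats1 redLK -catA /= -(cats0 [:: d; dinv d]) (red_cancel q d [::]) cats0 red_id.
rewrite /= Eq; case: d Eq => e [] Eq /=; rewrite !sumL_cons /=; ring.
Qed.

Lemma wchain_red p w : reduced p -> ceq (wchain p (red w)) (wchain p w).
Proof.
move=> Hp H; apply: (@red_invariant _ _ (fun w => sumL (wchain p w) H)) => a d b.
exact: wchain_cancel.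
Qed.

Lemma wchain_winv p w : reduced p ->
  ceq (wchain p (winv w)) (cscale (-1) (wchain (red (p ++ winv w)) w)).
Proof.
move=> Hp H.
have := wchain_red (winv w ++ w) Hp H.
rewrite red_winvL wchain_cat sumL_cat wpos_red // sumL_cscale /= sumL_nil => h.
have -> : sumL (wchain p (winv w)) H = 0 - sumL (wchain (red (p ++ winv w)) w) H.
  by rewrite h; ring.
ring.
Qed.

Lemma wchain_keys p w (a : T * rat) : a \in wchain p w -> exists2 d, d \in w & a.1.2 = d.1.
Proof.
elim: w p => [|d w IH] p //=; rewrite inE => /orP[/eqP ->|].
  by exists d; rewrite ?inE ?eqxx //; case: ifP.
by move=> /IH [d' Hd' ->]; exists d'; rewrite // inE Hd' orbT.
Qed.

Lemma wchain_reduced p w (a : T * rat) : reduced p -> a \in wchain p w -> reduced a.1.1.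
Proof.
elim: w p => [|d w IH] p Hp //=; rewrite inE => /orP[/eqP ->|].
  by case: ifP => _ //=; apply: red_reduced.
by apply: IH; apply: red_reduced.
Qed.

Variable fE : E -> seq D.
Variable gam : seq D.

Definition img d := if d.2 then fE d.1 else winv (fE d.1).

Lemma fw_cons d w : fw fE (d :: w) = img d ++ fw fE w. Proof. by []. Qed.
Lemma fw_cat a b : fw fE (a ++ b) = fw fE a ++ fw fE b.
Proof. by rewrite /fw map_cat flatten_cat. Qed.
Lemma img_dinv d : img (dinv d) = winv (img d).
Proof. by case: d => e [] //=; rewrite /img /= winvK. Qed.

Lemma red_fw a w : red (a ++ fw fE (red w)) = red (a ++ fw fE w).
Proof.
apply: (@red_invariant _ _ (fun w => red (a ++ fw fE w))) => x d y.
rewrite !fw_cat !fw_cons img_dinv !catA -(catA _ (img d)) -(catA (a ++ fw fE x)).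
by rewrite -(catA (img d)) red_cancelR.
Qed.

Lemma fw_winv w : fw fE (winv w) = winv (fw fE w).
Proof.
elim: w => [|d w IH] //.
by rewrite winv_cons fw_cat IH fw_cons /= cats0 img_dinv winv_cat.
Qed.

Definition Wf (s : T) : C := wchain (ftilde fE gam s.1) (fE s.2).

Lemma sumL_Af x H : sumL (Af fE gam x) H = sumL x (fun s => sumL (Wf s) H).
Proof.
rewrite /Af sumL_flatten /sumL; apply: eq_bigr => a _.
by rewrite -/(sumL _ _) sumL_cscale.
Qed.

Lemma ftilde_reduced p : reduced (ftilde fE gam p).
Proof. exact: red_reduced. Qed.

Lemma ftilde_act g p : ftilde fE gam (act g p) = act (Phi fE gam g) (ftilde fE gam p).
Proof.
rewrite /ftilde /act /Phi.
rewrite (red_fw gam (g ++ p)) fw_cat redLK redRK -!catA.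
by have := red_cancelL (gam ++ fw fE g) gam (fw fE p); rewrite -!catA => ->.
Qed.

Lemma ftilde_next p d : red (ftilde fE gam p ++ img d) = ftilde fE gam (red (rcons p d)).
Proof.
by rewrite /ftilde redLK red_fw -cats1 fw_cat fw_cons cats0 catA.
Qed.

Lemma Af_wchain p w : reduced p ->
  ceq (Af fE gam (wchain p w)) (wchain (ftilde fE gam p) (fw fE w)).
Proof.
elim: w p => [|d w IH] p Hp H //=.
rewrite fw_cons wchain_cat sumL_cat wpos_red ?ftilde_reduced // ftilde_next.
rewrite -/(Af fE gam _) sumL_cat -IH ?red_reduced //; congr (_ + _).
rewrite sumL_cscale.
case: d => e [] /=.
  by rewrite mul1r.
rewrite (wchain_winv _ (ftilde_reduced p)) sumL_cscale.
by rewrite -ftilde_next.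
Qed.

Lemma red_winv_red (x y : seq D) : red (winv (red x) ++ y) = red (winv x ++ y).
Proof.
rewrite -[RHS](red_cancelL [::] (red x)) /=.
rewrite -[RHS]redRK redLK (red_cancelR [::]) /= redRK //.
Qed.

Lemma Af_seg u v : reduced u -> ftilde fE gam u = u -> ftilde fE gam v = v ->
  ceq (Af fE gam (seg u v)) (seg u v).
Proof.
move=> Hu Fu Fv H; rewrite /seg Af_wchain // Fu -(wchain_red _ Hu).
rewrite (red_fw [::]) /=; congr (sumL (wchain u _) H).
rewrite -{2}Fu -{2}Fv /ftilde red_winv_red redRK winv_cat -catA red_cancelL.
by rewrite fw_cat fw_winv.
Qed.

End WChain.


Section AfH.
Variable E : finType.
Notation D := (dedge E).
Notation T := (tedge E).
Notation C := (chain E).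
Variables (HE : {set E}) (fE : E -> seq D) (gam : seq D).
Hypothesis HfE : forall e, e \in HE -> all (fun d => d.1 \in HE) (fE e).

Definition projf (H : T -> rat) := fun t : T => if t.2 \notin HE then H t else 0.

Lemma sumL_AfH x H : sumL (AfH HE fE gam x) H = sumL x (fun s => sumL (Wf fE gam s) (projf H)).
Proof. by rewrite /AfH sumL_projH sumL_Af. Qed.

Lemma sumL0 (x : C) : sumL x (fun _ => 0) = 0.
Proof. by rewrite /sumL big1 // => a _; rewrite mulr0. Qed.

Lemma Wf_H s H : s.2 \in HE -> sumL (Wf fE gam s) (projf H) = 0.
Proof.
move=> Hs; rewrite -(sumL0 (Wf fE gam s)); apply: sumL_ext => a /wchain_keys [d Hd Ea].
have := HfE Hs => /allP /(_ d Hd) Hd1.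
by rewrite /projf Ea Hd1.
Qed.

Lemma AfH_rho u v : reduced u -> ftilde fE gam u = u -> ftilde fE gam v = v ->
  ceq (AfH HE fE gam (projH HE (seg u v))) (projH HE (seg u v)).
Proof.
move=> Hu Fu Fv H.
rewrite sumL_AfH sumL_projH.
rewrite (sumL_ext (H2 := fun s => sumL (Wf fE gam s) (projf H))); last first.
  by move=> a _; case: ifP => // /negbFE /Wf_H ->.
by rewrite -sumL_Af Af_seg // sumL_projH.
Qed.

Lemma Wf_act g s : Wf fE gam (act g s.1, s.2) = cact (Phi fE gam g) (Wf fE gam s).
Proof. by rewrite /Wf /= ftilde_act wchain_act. Qed.

Lemma iter_formula (rho : C) (r : nat) (g : 'I_r -> seq D) (q : 'I_r -> rat) :
  ceq (AfH HE fE gam rho) rho ->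
  forall k H,
  sumL (iter k (AfH HE fE gam)
          (flatten [seq cact (g j) (cscale (q j) rho) | j <- enum 'I_r])) H =
  \sum_(j <- enum 'I_r) q j * sumL rho (fun s => H (act (iter k (Phi fE gam) (g j)) s.1, s.2)).
Proof.
move=> Hrho; elim=> [|k IH] H /=.
  by rewrite sumL_flatten; apply: eq_bigr => j _; rewrite sumL_cact sumL_cscale.
rewrite sumL_AfH IH; apply: eq_bigr => j _; congr (_ * _).
set h := iter k (Phi fE gam) (g j).
rewrite -[RHS]Hrho sumL_AfH; apply: sumL_ext => a _ /=.
rewrite (Wf_act _ a.1) sumL_cact; apply: sumL_ext => b _.
by rewrite /projf /=.
Qed.

End AfH.


Section Walks.
Variables (V E : finType) (src tgt : E -> V).
Notation D := (dedge E).
Implicit Types (d : D) (w a b : seq D).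

Fixpoint iw (u v : V) w : Prop :=
  if w is d :: w' then dorg src tgt d = u /\ iw (dter src tgt d) v w' else u = v.

Lemma iwP u v w : is_walk src tgt u v w <-> iw u v w.
Proof.
rewrite /is_walk /wend; elim: w u => [|d w IH] u /=; first by split => [/eqP|->].
rewrite -IH; split.
  by move=> /andP[/andP[/eqP -> ->] ->].
by move=> [-> /andP[-> ->]]; rewrite eqxx.
Qed.

Lemma iw_cat u v z a b : iw u v a -> iw v z b -> iw u z (a ++ b).
Proof. by elim: a u => [|d a IH] u /= => [->|[-> h1] h2] //; split => //; apply: IH. Qed.

Lemma iw_winv u v a : iw u v a -> iw v u (winv a).
Proof.
elim: a u => [|d a IH] u /=; first by move=> ->.
move=> [<- h]; rewrite winv_cons; apply: iw_cat (IH _ h) _.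
by case: d {h} => e [] /=.
Qed.

Lemma iw_red u v a : iw u v a -> iw u v (red a).
Proof.
elim: a u => [|d a IH] u //= [Hd /IH].
rewrite -/(red a) /cr.
case: (red a) => [|d' r] /=; first by move=> ->.
case: ifP => [/eqP -> [_ h]|_ h] //.
by move: h; rewrite -Hd; case: d {Hd} => e [].
Qed.

Variable fV : V -> V.
Variable fE : E -> seq D.
Hypothesis HfE : forall e, iw (fV (src e)) (fV (tgt e)) (fE e).

Lemma iw_fw u v a : iw u v a -> iw (fV u) (fV v) (fw fE a).
Proof.
elim: a u => [|d a IH] u /=; first by move=> ->.
move=> [<- h]; rewrite -/(fw fE a); apply: iw_cat (IH _ h).
by case: d {h} => e [] /=; [apply: HfE | apply: iw_winv; apply: HfE].
Qed.

Variable v0 : V.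
Variable gam : seq D.
Hypothesis Hgam : iw v0 (fV v0) gam.

Lemma FgrpP g : Fgrp src tgt v0 g <-> iw v0 v0 g /\ reduced g.
Proof. by rewrite /Fgrp; split => [/andP[/iwP h ->]|[/iwP -> ->]]. Qed.

Lemma Phi_Fgrp g : Fgrp src tgt v0 g -> Fgrp src tgt v0 (Phi fE gam g).
Proof.
move=> /FgrpP [h _]; apply/FgrpP; split; last exact: red_reduced.
apply: iw_red; apply: iw_cat Hgam _; apply: iw_cat (iw_fw h) _.
exact: iw_winv.
Qed.

Lemma diff_Fgrp a b : Fgrp src tgt v0 a -> Fgrp src tgt v0 b ->
  Fgrp src tgt v0 (red (winv a ++ b)).
Proof.
move=> /FgrpP [ha _] /FgrpP [hb _]; apply/FgrpP; split; last exact: red_reduced.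
by apply: iw_red; apply: iw_cat (iw_winv ha) hb.
Qed.

End Walks.

Lemma diff_nil (E : finType) (a b : seq (dedge E)) : reduced a -> reduced b ->
  red (winv a ++ b) = [::] -> a = b.
Proof.
move=> ha hb h.
by rewrite -(red_id hb) -(red_cancelR [::] a) /= -redRK h cats0 red_id.
Qed.

Lemma act_eq_red (E : finType) (a b t : seq (dedge E)) : act a t = act b t -> red a = red b.
Proof.
move=> h.
have E' x : red x = red (red (x ++ t) ++ winv t).
  by rewrite redLK -catA -(cats0 (winv t)) red_cancelR cats0.
by rewrite E' (h : red (a ++ t) = red (b ++ t)) -E'.
Qed.

Lemma winv_red_inj (E : finType) (a b : seq (dedge E)) : reduced a -> reduced b ->
  red (winv a) = red (winv b) -> a = b.
Proof.
move=> ha hb h.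
have e1 : red b = red (a ++ winv a ++ b) by rewrite (red_cancelR [::]).
have e2 : red (a ++ winv b ++ b ++ [::]) = red (a ++ [::]) by rewrite red_cancelL.
rewrite cats0 in e2.
by rewrite -(red_id hb) e1 -redLRK h redLRK e2 cats0 red_id.
Qed.


Lemma cs (I : Type) (J : seq I) (a : I -> rat) :
  (\sum_(j <- J) a j) ^+ 2 <= (size J)%:R * \sum_(j <- J) a j ^+ 2.
Proof.
elim: J => [|i J IH]; first by rewrite !big_nil expr0n mul0r.
rewrite !big_cons /=.
have HQ : 0 <= \sum_(j <- J) a j ^+ 2 by apply: sumr_ge0 => j _; apply: sqr_ge0.
move: IH HQ; set S := \sum_(j <- J) a j; set Q := \sum_(j <- J) _; set n := (size J)%:R.
have Hn : 0 <= n by rewrite /n ler0n.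
rewrite -natr1 -/n.
move=> h1 h2.
have [n0|npos] := eqVneq n 0.
  rewrite n0 mul0r in h1; have S0 : S = 0.
    by apply/eqP; rewrite -sqrf_eq0 eq_le h1 sqr_ge0.
  rewrite S0 n0; nra.
have key : 0 <= n * (n * a i ^+ 2 + Q - 2 * a i * S).
  have := sqr_ge0 (n * a i - S); nra.
have npos' : 0 < n by rewrite lt_neqAle eq_sym npos Hn.
rewrite pmulr_rge0 // in key. nra.
Qed.

Section Main.
Variable E : finType.
Notation D := (dedge E).
Notation T := (tedge E).
Notation C := (chain E).
Variables (rho y : C) (r : nat) (h : 'I_r -> seq D) (q : 'I_r -> rat).
Hypothesis Hy : forall H, sumL y H =
  \sum_(j <- enum 'I_r) q j * sumL rho (fun s => H (act (h j) s.1, s.2)).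
Hypothesis Hrk : forall a, a \in rho -> reduced a.1.1.
Hypothesis Hyk : forall a, a \in y -> reduced a.1.1.
Hypothesis hred : forall j, reduced (h j).
Hypothesis hinj : injective h.

Lemma act_eq_iff (g p t : seq D) : reduced p -> reduced t ->
  (act g p == t) = (p == act (winv g) t).
Proof.
move=> hp ht; apply/eqP/eqP => [<-|->]; first by rewrite act_invK.
by rewrite act_Kinv.
Qed.

Lemma coef_y (t : T) : reduced t.1 ->
  coef y t = \sum_(j <- enum 'I_r) q j * coef rho (act (winv (h j)) t.1, t.2).
Proof.
move=> ht; rewrite coefS Hy; apply: eq_bigr => j _; congr (_ * _).
rewrite coefS; apply: sumL_ext => a /Hrk ha.
case: t ht => t1 t2 /= ht; rewrite !xpair_eqE act_eq_iff //.
Qed.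

Lemma lower (t0 : T) : reduced t0.1 -> coef rho t0 ^+ 2 = 1 ->
  (forall i j, i != j -> coef rho (act (red (winv (h i) ++ h j)) t0.1, t0.2) = 0) ->
  \sum_(j < r) q j ^+ 2 <= norm2 y.
Proof.
move=> ht0 hc hz.
set S := [seq (act (h j) t0.1, t0.2) | j <- enum 'I_r].
have US : uniq S.
  rewrite map_inj_uniq ?enum_uniq // => i j [] /act_eq_red.
  by rewrite !red_id // => /hinj.
apply: le_trans (sum_le_norm2 y US).
rewrite big_map -big_enum /=; rewrite le_eqVlt; apply/orP; left; apply/eqP.
apply: eq_bigr => j _.
rewrite coef_y /=; last exact: act_reduced.
rewrite (bigD1_seq j) ?mem_enum ?enum_uniq //= big1_seq ?addr0.
  rewrite act_comp red_winvL /act /= red_id //.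
  by rewrite exprMn hc mulr1.
move=> i /andP[ne _]; rewrite act_comp hz ?mulr0 //.
Qed.

Let N := size (undup (map fst rho)).

Lemma upper : norm2 y <= N%:R * norm2 rho * \sum_(j < r) q j ^+ 2.
Proof.
set L := undup (map fst y).
have HL : forall t, t \in L -> reduced t.1.
  by move=> t; rewrite mem_undup => /mapP [a /Hyk ha ->].
set phi := fun j (t : T) => coef rho (act (winv (h j)) t.1, t.2).
have step : forall t, t \in L ->
    coef y t ^+ 2 <= N%:R * \sum_(j <- enum 'I_r) q j ^+ 2 * phi j t ^+ 2.
  move=> t /HL ht; rewrite coef_y //.
  set J := [seq j <- enum 'I_r | phi j t != 0].
  have e1 : \sum_(j <- enum 'I_r) q j * phi j t = \sum_(j <- J) q j * phi j t.
    rewrite /J [RHS]big_filter [RHS]big_mkcond /=; apply: eq_bigr => j _.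
    by case: eqP => // ->; rewrite mulr0.
  have e2 : \sum_(j <- enum 'I_r) q j ^+ 2 * phi j t ^+ 2 = \sum_(j <- J) (q j * phi j t) ^+ 2.
    rewrite /J [RHS]big_filter [RHS]big_mkcond /=; apply: eq_bigr => j _.
    by case: eqP => [->|_]; rewrite ?expr0n ?mulr0 // exprMn.
  rewrite e1 e2; apply: le_trans (cs _ _) _.
  apply: ler_wpM2r; first by apply: sumr_ge0 => j _; apply: sqr_ge0.
  rewrite ler_nat.
  have -> : size J = size [seq (act (winv (h j)) t.1, t.2) | j <- J] by rewrite size_map.
  apply: uniq_leq_size.
    rewrite map_inj_in_uniq; first by rewrite filter_uniq // enum_uniq.
    move=> i j _ _ [] /act_eq_red /winv_red_inj H; apply: hinj; exact: H.
  move=> s /mapP [j]; rewrite mem_filter => /andP[hj _] ->.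
  rewrite mem_undup; apply: contraR hj => /coef_notin.
  by rewrite /phi => ->; rewrite eqxx.
apply: le_trans (_ : \sum_(t <- L) N%:R * \sum_(j <- enum 'I_r) q j ^+ 2 * phi j t ^+ 2 <= _).
  rewrite /norm2 -/L [X in X <= _]big_seq [X in _ <= X]big_seq.
  by apply: ler_sum => t ht; apply: step.
rewrite -mulr_sumr -mulrA ler_wpM2l ?ler0n // exchange_big /= big_enum /= mulr_sumr.
apply: ler_sum => j _.
rewrite -mulr_sumr mulrC ler_wpM2r ?sqr_ge0 //.
rewrite -(big_map (fun t => (act (winv (h j)) t.1, t.2)) predT (fun s => coef rho s ^+ 2)).
apply: sum_le_norm2.
rewrite map_inj_in_uniq ?undup_uniq // => t t' /HL ht /HL ht' [e1 e2].
have : act (h j) (act (winv (h j)) t.1) = act (h j) (act (winv (h j)) t'.1) by rewrite e1.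
rewrite !act_Kinv // => e3.
by case: t t' e2 e3 {ht ht' e1} => a b [a' b'] /= -> ->.
Qed.

End Main.


Lemma keys_x (E : finType) (I : eqType) (s : seq I) (g : I -> seq (dedge E)) (q : I -> rat)
   (rho : chain E) a :
  a \in flatten [seq cact (g j) (cscale (q j) rho) | j <- s] -> reduced a.1.1.
Proof.
move=> /flatten_mapP [j _] /mapP [b _ ->] /=; exact: act_reduced.
Qed.

Lemma keys_AfH (E : finType) HE fE gam (x : chain E) a :
  a \in AfH HE fE gam x -> reduced a.1.1.
Proof.
rewrite mem_filter => /andP[_] /flatten_mapP [b _] /mapP [c hc ->] /=.
exact: (wchain_reduced (ftilde_reduced _ _ _) hc).
Qed.

Unset Implicit Arguments. Set Strict Implicit.
Theorem lemma5p2
  (V E : finType) (src tgt : E -> V) (v0 : V)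
  (HV : {set V}) (HE : {set E})
  (fV : V -> V) (fE : E -> seq (dedge E)) (gam : seq (dedge E))
  (u v : seq (dedge E)) :
  (* Gamma finite connected graph *)
  connected_graph src tgt ->
  (* H is a subgraph *)
  (forall e, e \in HE -> (src e \in HV) && (tgt e \in HV)) ->
  (* f cellular, edge-linear: each edge goes to an edge path *)
  (forall e, is_walk src tgt (fV (src e)) (fV (tgt e)) (fE e)) ->
  (* f(H) subset H *)
  (forall w, w \in HV -> fV w \in HV) ->
  (forall e, e \in HE -> all (fun d => d.1 \in HE) (fE e)) ->
  (* the fixed lift tilde f, given by a path gam from v0 to f(v0) *)
  is_walk src tgt v0 (fV v0) gam ->
  (* f is a homotopy equivalence: Phi_f : pi_1(Gamma,v0) -> pi_1(Gamma,v0)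
     is bijective *)
  (forall g h, Fgrp src tgt v0 g -> Fgrp src tgt v0 h ->
     Phi fE gam g = Phi fE gam h -> g = h) ->
  (forall h, Fgrp src tgt v0 h -> exists g, Fgrp src tgt v0 g /\ Phi fE gam g = h) ->
  (* u, v vertices of the universal cover fixed by tilde f *)
  tvert src tgt v0 u -> ftilde fE gam u = u ->
  tvert src tgt v0 v -> ftilde fE gam v = v ->
  (* non-geometricity of rho = pi_H^perp([u, v]) *)
  (exists t : tedge E, t.2 \notin HE /\
     (coef (projH HE (seg u v)) t = 1 \/ coef (projH HE (seg u v)) t = -1) /\
     (forall g, Fgrp src tgt v0 g -> g != [::] ->
        coef (projH HE (seg u v)) (act g t.1, t.2) = 0)) ->
  exists B : rat, 1 <= B /\
    forall (r : nat) (g : 'I_r -> seq (dedge E)) (q : 'I_r -> rat),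
      (forall j, Fgrp src tgt v0 (g j)) -> injective g ->
      forall k : nat,
        let x := flatten [seq cact (g j) (cscale (q j) (projH HE (seg u v)))
                         | j <- enum 'I_r] in
        let y := iter k (AfH HE fE gam) x in
        \sum_(j < r) q j ^+ 2 <= norm2 y /\ norm2 y <= B * \sum_(j < r) q j ^+ 2.
Proof.
move=> _ _ HfEw _ HfEH Hgam HPinj _ Hu Fu _ Fv [t0 [_ [t0c t0z]]].
set rho := projH HE (seg u v).
set N := size (undup (map fst rho)).
have n2ge0 : 0 <= norm2 rho by apply: sumr_ge0 => t _; apply: sqr_ge0.
exists (1 + N%:R * norm2 rho); split.
  by rewrite lerDl mulr_ge0 ?ler0n.
move=> r g q Hg ginj k x y.
have Hur : reduced u by case/andP: Hu.
have HfE' : forall e, iw src tgt (fV (src e)) (fV (tgt e)) (fE e) by move=> e; apply/iwP.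
have Hgam' : iw src tgt v0 (fV v0) gam by apply/iwP.
have itF : forall k a, Fgrp src tgt v0 a -> Fgrp src tgt v0 (iter k (Phi fE gam) a).
  by elim=> [|k' IH] a ha //=; apply: (Phi_Fgrp HfE' Hgam'); apply: IH.
have itI : forall k a b, Fgrp src tgt v0 a -> Fgrp src tgt v0 b ->
    iter k (Phi fE gam) a = iter k (Phi fE gam) b -> a = b.
  elim=> [|k' IH] a b ha hb //= e; apply: IH => //; apply: HPinj => //; exact: itF.
set h := fun j => iter k (Phi fE gam) (g j).
have hF : forall j, Fgrp src tgt v0 (h j) by move=> j; apply: itF.
have hred : forall j, reduced (h j) by move=> j; have /FgrpP [] := hF j.
have hinj : injective h by move=> i j /itI e; apply: ginj; apply: e.
have Hrho : ceq (AfH HE fE gam rho) rho by apply: AfH_rho.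
have Hy : forall H, sumL y H =
    \sum_(j <- enum 'I_r) q j * sumL rho (fun s => H (act (h j) s.1, s.2)).
  by move=> H; rewrite /y /x iter_formula.
have Hrk : forall a, a \in rho -> reduced a.1.1.
  by move=> a; rewrite mem_filter => /andP[_]; apply: wchain_reduced.
have Hyk : forall a, a \in y -> reduced a.1.1.
  rewrite /y; case: (k) => [|k'] a /=; first by apply: keys_x.
  exact: keys_AfH.
split.
  have t0k : t0 \in map fst rho.
    apply: contraT => /coef_notin; rewrite -/rho => e.
    by move: t0c; rewrite e => -[] /eqP; rewrite ?eqr_oppLR ?oppr0 // eq_sym oner_eq0.
  apply: (lower Hy Hrk hred hinj (t0 := t0)).
  - by move: t0k => /mapP [a /Hrk ha ->].
  - by case: t0c => ->; rewrite ?sqrrN expr1n.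
  - move=> i j ne; apply: t0z; first by apply: diff_Fgrp.
    apply/negP => /eqP /(diff_nil (hred i) (hred j)) /hinj e.
    by rewrite e eqxx in ne.
apply: le_trans (upper Hy Hrk Hyk hred hinj) _.
rewrite -/rho -/N ler_wpM2r ?lerDr //.
by apply: sumr_ge0 => j _; apply: sqr_ge0.
Qed.
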